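(* There is a constant $c>0$ depending only on $\alpha$ such that the following holds. Suppose $0<A<B$ and $\Lambda,\Gamma\ge0$ with $A\pm\Lambda$ and $B\pm\Gamma$ integers, $\Lambda<A$, $B-\Gamma\ge A$, and $\Gamma/B\le\frac18\Lambda/A$. Then \[ \Pr\Bigl[\bigcup_{\ell\le\Gamma}BINGO(A+\Lambda,A-\Lambda;B+\ell,B-\ell)\Bigr]\le e^{-c\Lambda^2/A}, \] where the union is over all $\ell\le\Gamma$ (including negative $\ell$) with $B\pm\ell$ integers.
   Context: Fix $\alpha>1$. Consider the Markov chain on $\mathbb N\times\mathbb N$ which from state $(i,j)$ moves to $(i+1,j)$ with probability $i^\alpha/(i^\alpha+j^\alpha)$ and to $(i,j+1)$ with probability $j^\alpha/(i^\alpha+j^\alpha)$. For states $(a,b)$, $(c,d)$, $BINGO(a,b;c,d)$ denotes the event that this chain, started at state $(a,b)$, visits the state $(c,d)$ (empty if $(c,d)$ is not coordinatewise $\ge(a,b)$). *)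

(* Defs.v *)
From Stdlib Require Import Reals Lra ClassicalEpsilon.
Open Scope R_scope.

(* weight w(i) = i^alpha for i >= 1; states have positive coordinates
   (N = {1,2,...}); we set w(0) = 0, which is never used from a start
   state with positive coordinates. *)
Definition wt (alpha : R) (i : nat) : R :=
  match i with O => 0 | S _ => Rpower (INR i) alpha end.

Definition pRight (alpha : R) (i j : nat) : R :=
  wt alpha i / (wt alpha i + wt alpha j).
Definition pUp (alpha : R) (i j : nat) : R :=
  wt alpha j / (wt alpha i + wt alpha j).

Fixpoint hitWithin (alpha : R) (S : nat -> nat -> Prop) (n : nat) (i j : nat)
  : R :=
  if excluded_middle_informative (S i j) then 1 else
  match n with
  | O => 0
  | Datatypes.S m => pRight alpha i j * hitWithin alpha S m (Datatypes.S i) j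
          + pUp alpha i j * hitWithin alpha S m i (Datatypes.S j)
  end.

(* Main.v *)
Require Import Defs.
From Stdlib Require Import Reals ZArith Lra Lia Psatz.
From Stdlib Require Import ClassicalEpsilon.
Open Scope R_scope.

Lemma exp_mono x y : x <= y -> exp x <= exp y.
Proof. intros [H|H]; [left; apply exp_increasing; auto| subst; lra]. Qed.

Lemma exp_up y : y <= 1/2 -> exp y <= 1 + y + 2 * y^2.
Proof.
  intros Hy.
  pose proof (exp_ineq1_le (-y)) as H.
  pose proof (exp_pos y).
  assert (E : exp y * exp (-y) = 1) by (rewrite <- exp_plus; replace (y + - y) with 0 by ring; apply exp_0).
  assert (exp y * (1 - y) <= 1) by nra.
  assert (1 <= (1 - y) * (1 + y + 2*y^2)) by nra.
  nra.
Qed.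

Lemma key (i j r th xs : R) :
  1 <= j -> j < i -> i/(i+j) <= r -> r <= 1 -> 0 <= th -> 4*th <= i+j ->
  r * exp (- th * ((i+1)/(i+j+1) - xs) + 2*th^2/(i+j+1))
  + (1-r) * exp (- th * (i/(i+j+1) - xs) + 2*th^2/(i+j+1))
  <= exp (- th * (i/(i+j) - xs) + 2*th^2/(i+j)).
Proof.
  intros Hj Hi Hr Hr1 Ht Hs.
  set (s := i + j). set (u := s*(s+1)).
  assert (Hs0 : 0 < s) by (unfold s; lra).
  assert (Hu : 0 < u) by (unfold u; nra).
  set (E0 := - th * (i/s - xs) + 2*th^2/s).
  set (y1 := - th * j / u). set (y2 := th * i / u). set (t := 2*th^2/u).
  assert (e1 : - th * ((i+1)/(s+1) - xs) + 2*th^2/(s+1) = E0 + y1 + - t).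
  { unfold E0, y1, t, u, s. field. split; lra. }
  assert (e2 : - th * (i/(s+1) - xs) + 2*th^2/(s+1) = E0 + y2 + - t).
  { unfold E0, y2, t, u, s. field. split; lra. }
  rewrite e1, e2. fold s. fold E0.
  rewrite !exp_plus.
  pose proof (exp_pos E0). pose proof (exp_pos (-t)).
  assert (Hr0 : i/s <= r) by exact Hr.
  assert (Hrs : i <= r * s).
  { apply Rmult_le_compat_r with (r := s) in Hr0; [|lra].
    unfold Rdiv in Hr0. rewrite Rmult_assoc, Rinv_l in Hr0; lra. }
  assert (Hy1 : y1 <= 0).
  { unfold y1. unfold Rdiv. pose proof (Rinv_0_lt_compat u Hu).
    assert (0 <= th * j) by nra.
    replace (- th * j * / u) with (- ((th * j) * / u)) by ring.
    assert (0 <= th * j * / u) by (apply Rmult_le_pos; lra). lra. }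
  assert (Hy2b : y2 * u = th * i) by (unfold y2; field; lra).
  assert (Hy1b : y1 * u = - th * j) by (unfold y1; field; lra).
  assert (Htb : t * u = 2 * th^2) by (unfold t; field; lra).
  assert (Hus : u = s * (s+1)) by reflexivity.
  assert (Hy2 : y2 <= 1/4).
  { assert (y2 * u <= u / 4) by (rewrite Hy2b; unfold s in *; nra). nra. }
  assert (Hy20 : 0 <= y2) by nra.
  pose proof (exp_up y1 ltac:(lra)). pose proof (exp_up y2 ltac:(lra)).
  assert (Hm : r*y1 + (1-r)*y2 <= 0).
  { assert ((r*y1 + (1-r)*y2) * u <= 0).
    { replace ((r*y1 + (1-r)*y2) * u) with (r*(y1*u) + (1-r)*(y2*u)) by ring.
      rewrite Hy1b, Hy2b. unfold s in Hrs. nra. }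
    nra. }
  assert (Hq1 : y1^2 * u <= th^2).
  { assert (y1^2 * u^2 = th^2 * j^2) by (replace (y1^2*u^2) with ((y1*u)^2) by ring; rewrite Hy1b; ring).
    assert (j^2 <= u) by (unfold s in Hus; nra). nra. }
  assert (Hq2 : y2^2 * u <= th^2).
  { assert (y2^2 * u^2 = th^2 * i^2) by (replace (y2^2*u^2) with ((y2*u)^2) by ring; rewrite Hy2b; ring).
    assert (i^2 <= u) by (unfold s in Hus; nra). nra. }
  assert (Hv : 2*(r*y1^2 + (1-r)*y2^2) <= t).
  { assert (Hrp : 0 <= r).
    { assert (0 <= i/s) by (unfold Rdiv; apply Rmult_le_pos; [lra| left; apply Rinv_0_lt_compat; lra]). lra. }
    assert (r*(y1^2*u) <= r*th^2) by (apply Rmult_le_compat_l; lra).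
    assert ((1-r)*(y2^2*u) <= (1-r)*th^2) by (apply Rmult_le_compat_l; lra).
    assert (2*(r*y1^2 + (1-r)*y2^2) * u <= t * u) by (rewrite Htb; nra). nra. }
  assert (Hsum : r * exp y1 + (1-r) * exp y2 <= exp t).
  { pose proof (exp_ineq1_le t).
    assert (Hrp : 0 <= r).
    { assert (0 <= i/s) by (unfold Rdiv; apply Rmult_le_pos; [lra| left; apply Rinv_0_lt_compat; lra]). lra. }
    assert (r*exp y1 <= r*(1 + y1 + 2*y1^2)) by (apply Rmult_le_compat_l; lra).
    assert ((1-r)*exp y2 <= (1-r)*(1 + y2 + 2*y2^2)) by (apply Rmult_le_compat_l; lra).
    nra. }
  assert (Het : exp t * exp (-t) = 1) by (rewrite <- exp_plus; replace (t + - t) with 0 by ring; apply exp_0).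
  assert (Hfac : r * (exp E0 * exp y1 * exp (- t)) + (1 - r) * (exp E0 * exp y2 * exp (- t))
          = exp E0 * exp (-t) * (r * exp y1 + (1-r) * exp y2)) by ring.
  rewrite Hfac.
  assert (exp E0 * exp (-t) * (r * exp y1 + (1-r) * exp y2) <= exp E0 * exp (-t) * exp t).
  { apply Rmult_le_compat_l; [nra| exact Hsum]. }
  nra.
Qed.

Definition G (th xs : R) (i j : nat) : R :=
  exp (- th * (INR i/(INR i + INR j) - xs) + 2*th^2/(INR i + INR j)).

Lemma wt_pos al k : (1 <= k)%nat -> 0 < wt al k.
Proof. intros H. destruct k; [lia|]. unfold wt, Rpower. apply exp_pos. Qed.

Lemma wt_nonneg al k : 0 <= wt al k.
Proof. destruct k; [simpl; lra|]. left; apply wt_pos; lia. Qed.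

Lemma pR_ge al i j : 1 <= al -> (1 <= j)%nat -> INR j < INR i ->
  INR i / (INR i + INR j) <= pRight al i j.
Proof.
  intros Ha Hj Hij.
  assert (Hj1 : 1 <= INR j) by (apply (le_INR 1); auto).
  destruct i as [|i']; [simpl in Hij; lra|].
  destruct j as [|j']; [lia|].
  unfold pRight, wt.
  set (x := INR (S i')) in *. set (y := INR (S j')) in *.
  assert (ex : Rpower x al = x * Rpower x (al - 1)).
  { replace al with (1 + (al - 1)) at 1 by ring. rewrite Rpower_plus, Rpower_1; lra. }
  assert (ey : Rpower y al = y * Rpower y (al - 1)).
  { replace al with (1 + (al - 1)) at 1 by ring. rewrite Rpower_plus, Rpower_1; lra. }
  assert (Hm : Rpower y (al-1) <= Rpower x (al-1)) by (apply Rle_Rpower_l; lra).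
  assert (Py : 0 < Rpower y (al-1)) by (unfold Rpower; apply exp_pos).
  rewrite ex, ey.
  set (a := Rpower x (al-1)) in *. set (b := Rpower y (al-1)) in *.
  assert (Hx : 0 < x) by lra.
  assert (Pa : 0 < a) by lra.
  assert (D : x*a/(x*a + y*b) - x/(x+y) = (x*y*(a-b)) / ((x*a+y*b)*(x+y))).
  { field. split; nra. }
  assert (0 <= (x*y*(a-b)) / ((x*a+y*b)*(x+y))).
  { unfold Rdiv. apply Rmult_le_pos.
    - assert (0 <= x*y) by nra. nra.
    - left. apply Rinv_0_lt_compat. apply Rmult_lt_0_compat; [|lra].
      assert (0 < x*a) by (apply Rmult_lt_0_compat; lra).
      assert (0 < y*b) by (apply Rmult_lt_0_compat; lra). lra. }
  lra.
Qed.

Lemma G_pos th xs i j : 0 < G th xs i j.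
Proof. unfold G; apply exp_pos. Qed.

Lemma ind_lemma (al th xs : R) (Sx : nat -> nat -> Prop) :
  1 <= al -> 0 <= th -> 1/2 <= xs ->
  (forall i j, Sx i j -> 1 <= G th xs i j) ->
  forall n i j, (1 <= j)%nat -> 4*th <= INR i + INR j ->
  hitWithin al Sx n i j <= Rmin 1 (G th xs i j).
Proof.
  intros Ha Ht Hx HS n. induction n as [|m IH]; intros i j Hj Hs; simpl.
  - destruct (excluded_middle_informative (Sx i j)) as [h|h].
    + rewrite Rmin_left; [lra| apply HS; auto].
    + apply Rmin_glb; [lra| left; apply G_pos].
  - destruct (excluded_middle_informative (Sx i j)) as [h|h].
    + rewrite Rmin_left; [lra| apply HS; auto].
    + assert (Hj1 : 1 <= INR j) by (apply (le_INR 1); auto).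
      assert (Hi0 : 0 <= INR i) by apply pos_INR.
      pose proof (wt_pos al j Hj) as Pj. pose proof (wt_nonneg al i) as Pi.
      assert (Hsum : pRight al i j + pUp al i j = 1).
      { unfold pRight, pUp. field. lra. }
      assert (HpR : 0 <= pRight al i j).
      { unfold pRight, Rdiv. apply Rmult_le_pos; [lra| left; apply Rinv_0_lt_compat; lra]. }
      assert (HpU : 0 <= pUp al i j).
      { unfold pUp, Rdiv. apply Rmult_le_pos; [lra| left; apply Rinv_0_lt_compat; lra]. }
      assert (I1 := IH (S i) j Hj ltac:(rewrite S_INR; lra)).
      assert (I2 := IH i (S j) ltac:(lia) ltac:(rewrite S_INR; lra)).
      assert (Hb : pRight al i j * hitWithin al Sx m (S i) j + pUp al i j * hitWithin al Sx m i (S j)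
                   <= pRight al i j * Rmin 1 (G th xs (S i) j) + pUp al i j * Rmin 1 (G th xs i (S j))).
      { apply Rplus_le_compat; apply Rmult_le_compat_l; auto. }
      eapply Rle_trans; [exact Hb|].
      destruct (Rle_lt_dec 1 (G th xs i j)) as [g1|g1].
      * rewrite (Rmin_left _ _ g1).
        pose proof (Rmin_l 1 (G th xs (S i) j)). pose proof (Rmin_l 1 (G th xs i (S j))).
        assert (pRight al i j * Rmin 1 (G th xs (S i) j) <= pRight al i j * 1) by (apply Rmult_le_compat_l; auto).
        assert (pUp al i j * Rmin 1 (G th xs i (S j)) <= pUp al i j * 1) by (apply Rmult_le_compat_l; auto).
        lra.
      * rewrite (Rmin_right 1 (G th xs i j)); [|lra].
        assert (Hgt : INR j < INR i).
        { unfold G in g1. rewrite <- exp_0 in g1.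
          destruct (Rlt_or_le (INR j) (INR i)) as [hh|hh]; auto.
          exfalso.
          assert (INR i/(INR i + INR j) <= 1/2).
          { apply Rmult_le_reg_r with (INR i + INR j); [lra|].
            unfold Rdiv. rewrite Rmult_assoc, Rinv_l; lra. }
          assert (0 <= 2 * th^2 / (INR i + INR j)).
          { unfold Rdiv. apply Rmult_le_pos; [nra| left; apply Rinv_0_lt_compat; lra]. }
          assert (0 <= - th * (INR i / (INR i + INR j) - xs)) by nra.
          assert (exp 0 <= exp (- th * (INR i / (INR i + INR j) - xs) + 2 * th ^ 2 / (INR i + INR j)))
            by (apply exp_mono; lra).
          lra. }
        pose proof (Rmin_r 1 (G th xs (S i) j)). pose proof (Rmin_r 1 (G th xs i (S j))).
        assert (pRight al i j * Rmin 1 (G th xs (S i) j) <= pRight al i j * G th xs (S i) j) by (apply Rmult_le_compat_l; auto).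
        assert (pUp al i j * Rmin 1 (G th xs i (S j)) <= pUp al i j * G th xs i (S j)) by (apply Rmult_le_compat_l; auto).
        assert (K := key (INR i) (INR j) (pRight al i j) th xs Hj1 Hgt
                   (pR_ge al i j Ha Hj Hgt) ltac:(lra) Ht Hs).
        assert (E1 : G th xs (S i) j = exp (- th * ((INR i + 1) / (INR i + INR j + 1) - xs) + 2 * th ^ 2 / (INR i + INR j + 1))).
        { unfold G. rewrite S_INR. f_equal. replace (INR i + 1 + INR j) with (INR i + INR j + 1) by ring. reflexivity. }
        assert (E2 : G th xs i (S j) = exp (- th * (INR i / (INR i + INR j + 1) - xs) + 2 * th ^ 2 / (INR i + INR j + 1))).
        { unfold G. rewrite S_INR. f_equal. replace (INR i + (INR j + 1)) with (INR i + INR j + 1) by ring. reflexivity. }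
        replace (pUp al i j) with (1 - pRight al i j) in * by lra.
        rewrite E1, E2 in *. unfold G. lra.
Qed.

Theorem mainTheorem10 :
  forall alpha : R, 1 < alpha ->
  exists c : R, 0 < c /\
  forall (A B Lam Gam : R) (p q : nat),
    0 < A -> A < B -> 0 <= Lam -> 0 <= Gam ->
    (* A + Lam and A - Lam are integers; they are the start coordinates *)
    INR p = A + Lam -> INR q = A - Lam ->
    (exists z : Z, IZR z = B + Gam) -> (exists z : Z, IZR z = B - Gam) ->
    Lam < A -> A <= B - Gam -> Gam / B <= (1/8) * (Lam / A) ->
    forall n : nat,
      hitWithin alpha
        (fun i j => exists l : R, l <= Gam /\ INR i = B + l /\ INR j = B - l)
        n p q
      <= exp (- c * Lam ^ 2 / A).
Proof.
  intros al Hal. exists (1/32). split; [lra|].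
  intros A B Lam Gam p q HA HAB HL HG Hp Hq _ _ HLA HBG Hrat n.
  set (th := Lam / 8). set (xs := (B + Gam) / (2 * B)).
  assert (HB : 0 < B) by lra.
  assert (Hxs : 1/2 <= xs).
  { assert (e : xs = 1/2 + Gam * / (2*B)) by (unfold xs; field; lra).
    assert (0 <= Gam * / (2*B)) by (apply Rmult_le_pos; [lra| left; apply Rinv_0_lt_compat; lra]).
    lra. }
  assert (Hq1 : (1 <= q)%nat).
  { destruct q; [simpl in Hq; lra| lia]. }
  eapply Rle_trans.
  - apply (ind_lemma al th xs); [lra| unfold th; lra| lra| | |].
    + intros i j [l [Hl [Hi Hj]]].
      unfold G. rewrite Hi, Hj.
      replace (B + l + (B - l)) with (2*B) by ring.
      assert (e : (B + l) / (2*B) - xs = (l - Gam) / (2*B)) by (unfold xs; field; lra).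
      rewrite e.
      assert (0 <= - th * ((l - Gam) / (2 * B))).
      { replace (- th * ((l - Gam) / (2 * B))) with (th * (Gam - l) * / (2*B)) by (field; lra).
        apply Rmult_le_pos; [apply Rmult_le_pos; unfold th; lra| left; apply Rinv_0_lt_compat; lra]. }
      assert (0 <= 2 * th^2 / (2*B)).
      { unfold Rdiv. apply Rmult_le_pos; [nra| left; apply Rinv_0_lt_compat; lra]. }
      pose proof (exp_ineq1_le (- th * ((l - Gam) / (2 * B)) + 2 * th ^ 2 / (2 * B))). lra.
    + exact Hq1.
    + rewrite Hp, Hq. unfold th. lra.
  - eapply Rle_trans; [apply Rmin_r|].
    unfold G. apply exp_mono. rewrite Hp, Hq.
    replace (A + Lam + (A - Lam)) with (2*A) by ring.
    set (u := Lam / A). set (w := Gam / B).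
    assert (e : - th * ((A + Lam) / (2 * A) - xs) + 2 * th ^ 2 / (2 * A)
                = - Lam / 16 * (u - w) + Lam * u / 64).
    { unfold th, xs, u, w. field. lra. }
    rewrite e.
    assert (e2 : - (1/32) * Lam ^ 2 / A = - Lam * u / 32) by (unfold u; field; lra).
    rewrite e2.
    assert (0 <= u) by (unfold u, Rdiv; apply Rmult_le_pos; [lra| left; apply Rinv_0_lt_compat; lra]).
    fold u w in Hrat. nra.
Qed.
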